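(* Let $\mathcal{R}=(\mathcal{X},(\mathcal{M},\mathcal{I}))$ be a reflexive graph category with isomorphisms that has terminal objects stable under face maps and degeneracies. Then for each natural number $n$, the category $\mathcal{M}^n\to\mathcal{M}$ has a terminal object.
   Context: Fix a locally small category $\mathcal{C}$ with finite products; all categories, functors and natural transformations below are internal to $\mathcal{C}$ (objects of objects $C_0$, of morphisms $C_1$, source/target $\mathsf{s}_C,\mathsf{t}_C$, identities $\mathsf{id}_C$, composition $\circ_C$ on generalized morphisms $J\to C_1$, object/morphism parts $F_0,F_1$ of functors). A reflexive graph category $\mathcal{X}$ consists of internal categories $\mathcal{X}(0),\mathcal{X}(1)$, two distinct internal functors $\mathcal{X}(\mathbf{f}_\top),\mathcal{X}(\mathbf{f}_\bot):\mathcal{X}(1)\to\mathcal{X}(0)$ (face maps) and an internal functor $\mathcal{X}(\mathbf{d}):\mathcal{X}(0)\to\mathcal{X}(1)$ (degeneracy) with $\mathcal{X}(\mathbf{f}_\star)\circ\mathcal{X}(\mathbf{d})=\mathsf{id}$; $\mathcal{X}^n$ is the componentwise product. A reflexive graph functor $\mathcal{F}:\mathcal{X}\to\mathcal{Y}$ is a pair of internal functors $\mathcal{F}(l):\mathcal{X}(l)\to\mathcal{Y}(l)$; face map-preserving: $\mathcal{Y}(\mathbf{f}_\star)\circ\mathcal{F}(1)=\mathcal{F}(0)\circ\mathcal{X}(\mathbf{f}_\star)$; degeneracy-preserving: equipped with an internal natural isomorphism $\varepsilon_\mathcal{F}:\mathcal{Y}(\mathbf{d})\circ\mathcal{F}(0)\to\mathcal{F}(1)\circ\mathcal{X}(\mathbf{d})$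 with $\mathcal{Y}(\mathbf{f}_\star)_1\circ\varepsilon_\mathcal{F}=\mathsf{id}_{\mathcal{Y}(0)}\circ\mathcal{F}(0)_0$. Reflexive graph natural transformations $\eta:\mathcal{F}\to\mathcal{G}$: pairs of internal natural transformations $\eta(l):\mathcal{F}(l)\to\mathcal{G}(l)$; face map-preserving: $\mathcal{Y}(\mathbf{f}_\star)_1\circ\eta(1)=\eta(0)\circ\mathcal{X}(\mathbf{f}_\star)_0$; degeneracy-preserving: $(\eta(1)\circ\mathcal{X}(\mathbf{d})_0)\circ_{\mathcal{Y}(1)}\varepsilon_\mathcal{F}=\varepsilon_\mathcal{G}\circ_{\mathcal{Y}(1)}(\mathcal{Y}(\mathbf{d})_1\circ\eta(0))$. Composition $(\mathcal{G}\circ\mathcal{F})(l)=\mathcal{G}(l)\circ\mathcal{F}(l)$, $\varepsilon_{\mathcal{G}\circ\mathcal{F}}=(\mathcal{G}(1)_1\circ\varepsilon_\mathcal{F})\circ(\varepsilon_\mathcal{G}\circ\mathcal{F}(0)_0)$. A reflexive graph category with isomorphisms $\mathcal{R}=(\mathcal{X},(\mathcal{M},\mathcal{I}))$: reflexive graph categories $\mathcal{X},\mathcal{M}$ and a reflexive graph functor $\mathcal{I}:\mathcal{M}\to\mathcal{X}$ with $\mathcal{I}(l)_0$ iso, $\mathcal{I}(l)_1$ monic, $\mathcal{I}(0)\circ\mathcal{M}(\mathbf{f}_\star)=\mathcal{X}(\mathbf{f}_\star)\circ\mathcal{I}(1)$, $\mathcal{I}(1)\circ\mathcal{M}(\mathbf{d})=\mathcal{X}(\mathbf{d})\circ\mathcal{I}(0)$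 (so $\varepsilon_\mathcal{I}$ is an identity), and every morphism of $\mathcal{M}(l)$ an isomorphism; $\mathcal{M}(l)$ is regarded as a wide subcategory of $\mathcal{X}(l)$ and a morphism of $\mathcal{X}(l)$ ''lies in $\mathcal{M}(l)$'' if it is in the image of $\mathcal{I}(l)_1$. The category $\mathcal{M}^n\to\mathcal{M}$ has as objects the face map- and degeneracy-preserving reflexive graph functors $\mathcal{M}^n\to\mathcal{M}$ and as morphisms $\mathcal{F}\to\mathcal{G}$ the face map- and degeneracy-preserving reflexive graph natural transformations $\mathcal{I}\circ\mathcal{F}\to\mathcal{I}\circ\mathcal{G}$, with componentwise identities and composition. An internal category $C$ has a terminal object if it is equipped with $1_C:1\to C_0$ such that for every generalized object $a:J\to C_0$ there is a unique $!_C(a):J\to C_1$ with source $a$ and target $1_C\circ !_J$. $\mathcal{R}$ has terminal objects stable under face maps and degeneracies if $\mathcal{X}(0)$ and $\mathcal{X}(1)$ have terminal objects, $\mathcal{X}(\mathbf{f}_\star)_0\circ 1_{\mathcal{X}(1)}=1_{\mathcal{X}(0)}$ for both $\star$ (the canonical comparison morphism being the identity), and the canonical morphism $\eta^1_\mathcal{X}:\mathcal{X}(\mathbf{d})_0\circ 1_{\mathcal{X}(0)}\to 1_{\mathcal{X}(1)}$ in $\mathcal{X}(1)$ is an isomorphism lying in $\mathcal{M}(1)$. *)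

(* Defs.v *)
Record Cat := {
  ob :> Type;
  hom : ob -> ob -> Type;
  idm : forall a, hom a a;
  cmp : forall a b c, hom b c -> hom a b -> hom a c;
  cmp_idl : forall a b (f : hom a b), cmp a b b (idm b) f = f;
  cmp_idr : forall a b (f : hom a b), cmp a a b f (idm a) = f;
  cmp_assoc : forall a b c d (h : hom c d) (g : hom b c) (f : hom a b),
      cmp a c d h (cmp a b c g f) = cmp a b d (cmp b c d h g) f;
  one : ob;
  to_one : forall a, hom a one;
  to_one_uniq : forall a (f g : hom a one), f = g;
  prod : ob -> ob -> ob;
  pr1 : forall a b, hom (prod a b) a;
  pr2 : forall a b, hom (prod a b) b;
  pair : forall x a b, hom x a -> hom x b -> hom x (prod a b);
  pr1_pair : forall x a b (f : hom x a) (g : hom x b),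
      cmp x (prod a b) a (pr1 a b) (pair x a b f g) = f;
  pr2_pair : forall x a b (f : hom x a) (g : hom x b),
      cmp x (prod a b) b (pr2 a b) (pair x a b f g) = g;
  pair_eta : forall x a b (h : hom x (prod a b)),
      h = pair x a b (cmp x (prod a b) a (pr1 a b) h) (cmp x (prod a b) b (pr2 a b) h)
}.

Set Implicit Arguments.
Unset Strict Implicit.

Arguments hom {_} _ _.
Arguments idm {_} _.
Arguments cmp {_ _ _ _} _ _.
Arguments one {_}.
Arguments to_one {_} _.
Arguments prod {_} _ _.
Arguments pr1 {_ _ _}.
Arguments pr2 {_ _ _}.
Arguments pair {_ _ _ _} _ _.

Notation "g ⊙ f" := (cmp g f) (at level 40, left associativity).

Section Internal.
Variable C : Cat.

Definition monic (a b : C) (f : hom a b) : Prop :=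
  forall x (u v : hom x a), f ⊙ u = f ⊙ v -> u = v.
Definition iso (a b : C) (f : hom a b) : Prop :=
  exists g : hom b a, g ⊙ f = idm a /\ f ⊙ g = idm b.

(* Internal categories: data.  Composition is given on generalized      *)
(* morphisms J -> C1 (icomp J f g = "f after g"); its value on          *)
(* non-composable pairs is irrelevant (never constrained nor used).     *)
Record ICat := {
  c0 : C; c1 : C;
  src : hom c1 c0; tgt : hom c1 c0; iid : hom c0 c1;
  icomp : forall J : C, hom J c1 -> hom J c1 -> hom J c1 }.

Arguments icomp _ {_} _ _.

Definition composable (X : ICat) (J : C) (f g : hom J (c1 X)) : Prop :=
  src X ⊙ f = tgt X ⊙ g.

Definition is_icat (X : ICat) : Prop :=
  src X ⊙ iid X = idm (c0 X) /\ tgt X ⊙ iid X = idm (c0 X) /\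
  (forall J (f g : hom J (c1 X)), composable f g ->
      src X ⊙ icomp X f g = src X ⊙ g /\ tgt X ⊙ icomp X f g = tgt X ⊙ f) /\
  (forall J K (h : hom K J) (f g : hom J (c1 X)), composable f g ->
      icomp X (f ⊙ h) (g ⊙ h) = icomp X f g ⊙ h) /\
  (forall J (f : hom J (c1 X)), icomp X f (iid X ⊙ (src X ⊙ f)) = f) /\
  (forall J (f : hom J (c1 X)), icomp X (iid X ⊙ (tgt X ⊙ f)) f = f) /\
  (forall J (f g h : hom J (c1 X)), composable f g -> composable g h ->
      icomp X f (icomp X g h) = icomp X (icomp X f g) h).

Definition iiso (X : ICat) (J : C) (f : hom J (c1 X)) : Prop :=
  exists g : hom J (c1 X), composable f g /\ composable g f /\
    icomp X f g = iid X ⊙ (tgt X ⊙ f) /\ icomp X g f = iid X ⊙ (src X ⊙ f).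

Definition is_terminal (X : ICat) (t : hom one (c0 X)) : Prop :=
  forall J (a : hom J (c0 X)),
    exists! u : hom J (c1 X), src X ⊙ u = a /\ tgt X ⊙ u = t ⊙ to_one J.

Record IFun (X Y : ICat) := { f0 : hom (c0 X) (c0 Y); f1 : hom (c1 X) (c1 Y) }.

Definition is_ifun X Y (F : IFun X Y) : Prop :=
  src Y ⊙ f1 F = f0 F ⊙ src X /\ tgt Y ⊙ f1 F = f0 F ⊙ tgt X /\
  f1 F ⊙ iid X = iid Y ⊙ f0 F /\
  (forall J (f g : hom J (c1 X)), composable f g ->
      f1 F ⊙ icomp X f g = icomp Y (f1 F ⊙ f) (f1 F ⊙ g)).

Definition feq X Y (F G : IFun X Y) : Prop := f0 F = f0 G /\ f1 F = f1 G.

Definition fcomp X Y Z (G : IFun Y Z) (F : IFun X Y) : IFun X Z :=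
  {| f0 := f0 G ⊙ f0 F; f1 := f1 G ⊙ f1 F |}.

Definition fid X : IFun X X := {| f0 := idm (c0 X); f1 := idm (c1 X) |}.

Definition is_nt X Y (F G : IFun X Y) (a : hom (c0 X) (c1 Y)) : Prop :=
  src Y ⊙ a = f0 F /\ tgt Y ⊙ a = f0 G /\
  icomp Y (f1 G) (a ⊙ src X) = icomp Y (a ⊙ tgt X) (f1 F).

Definition is_niso X Y (F G : IFun X Y) (a : hom (c0 X) (c1 Y)) : Prop :=
  is_nt F G a /\ iiso a.

Definition iterm : ICat :=
  {| c0 := one; c1 := one; src := idm one; tgt := idm one; iid := idm one;
     icomp := fun J f g => f |}.

Definition iprod (X Y : ICat) : ICat :=
  {| c0 := prod (c0 X) (c0 Y); c1 := prod (c1 X) (c1 Y);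
     src := pair (src X ⊙ pr1) (src Y ⊙ pr2);
     tgt := pair (tgt X ⊙ pr1) (tgt Y ⊙ pr2);
     iid := pair (iid X ⊙ pr1) (iid Y ⊙ pr2);
     icomp := fun J f g =>
       pair (icomp X (pr1 ⊙ f) (pr1 ⊙ g)) (icomp Y (pr2 ⊙ f) (pr2 ⊙ g)) |}.

Definition fprod X X' Y Y' (F : IFun X Y) (G : IFun X' Y')
  : IFun (iprod X X') (iprod Y Y') :=
  @Build_IFun (iprod X X') (iprod Y Y')
    (pair (f0 F ⊙ pr1) (f0 G ⊙ pr2)) (pair (f1 F ⊙ pr1) (f1 G ⊙ pr2)).

Fixpoint ipow (X : ICat) (n : nat) : ICat :=
  match n with O => iterm | S m => iprod X (ipow X m) end.

Fixpoint fpow X Y (F : IFun X Y) (n : nat) : IFun (ipow X n) (ipow Y n) :=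
  match n with O => fid iterm | S m => fprod F (fpow F m) end.

Inductive face := fTop | fBot.

Record RG := {
  rg0 : ICat; rg1 : ICat;
  ftop : IFun rg1 rg0; fbot : IFun rg1 rg0; dgn : IFun rg0 rg1 }.

Definition fc (X : RG) (s : face) : IFun (rg1 X) (rg0 X) :=
  match s with fTop => ftop X | fBot => fbot X end.

Definition is_rg (X : RG) : Prop :=
  is_icat (rg0 X) /\ is_icat (rg1 X) /\
  is_ifun (ftop X) /\ is_ifun (fbot X) /\ is_ifun (dgn X) /\
  ~ feq (ftop X) (fbot X) /\
  (forall s, feq (fcomp (fc X s) (dgn X)) (fid (rg0 X))).

Definition rgpow (X : RG) (n : nat) : RG :=
  {| rg0 := ipow (rg0 X) n; rg1 := ipow (rg1 X) n;
     ftop := fpow (ftop X) n; fbot := fpow (fbot X) n; dgn := fpow (dgn X) n |}.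

(* reflexive graph functors: a pair of internal functors, together with
   the (degeneracy) comparison eps : Y(d) o F(0) -> F(1) o X(d) *)
Record RGFun (X Y : RG) := {
  rf0 : IFun (rg0 X) (rg0 Y); rf1 : IFun (rg1 X) (rg1 Y);
  reps : hom (c0 (rg0 X)) (c1 (rg1 Y)) }.

Definition is_rgfun X Y (F : RGFun X Y) : Prop :=
  is_ifun (rf0 F) /\ is_ifun (rf1 F).

Definition face_pres X Y (F : RGFun X Y) : Prop :=
  forall s, feq (fcomp (fc Y s) (rf1 F)) (fcomp (rf0 F) (fc X s)).

Definition deg_pres X Y (F : RGFun X Y) : Prop :=
  is_niso (fcomp (dgn Y) (rf0 F)) (fcomp (rf1 F) (dgn X)) (reps F) /\
  (forall s, f1 (fc Y s) ⊙ reps F = iid (rg0 Y) ⊙ f0 (rf0 F)).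

Definition rgcomp X Y Z (G : RGFun Y Z) (F : RGFun X Y) : RGFun X Z :=
  {| rf0 := fcomp (rf0 G) (rf0 F); rf1 := fcomp (rf1 G) (rf1 F);
     reps := icomp (rg1 Z) (f1 (rf1 G) ⊙ reps F) (reps G ⊙ f0 (rf0 F)) |}.

Definition is_rgnt X Y (F G : RGFun X Y)
    (e0 : hom (c0 (rg0 X)) (c1 (rg0 Y))) (e1 : hom (c0 (rg1 X)) (c1 (rg1 Y))) : Prop :=
  is_nt (rf0 F) (rf0 G) e0 /\ is_nt (rf1 F) (rf1 G) e1.

Definition nt_face_pres X Y (e0 : hom (c0 (rg0 X)) (c1 (rg0 Y)))
    (e1 : hom (c0 (rg1 X)) (c1 (rg1 Y))) : Prop :=
  forall s, f1 (fc Y s) ⊙ e1 = e0 ⊙ f0 (fc X s).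

Definition nt_deg_pres X Y (F G : RGFun X Y)
    (e0 : hom (c0 (rg0 X)) (c1 (rg0 Y))) (e1 : hom (c0 (rg1 X)) (c1 (rg1 Y))) : Prop :=
  icomp (rg1 Y) (e1 ⊙ f0 (dgn X)) (reps F) =
  icomp (rg1 Y) (reps G) (f1 (dgn Y) ⊙ e0).

Record RGI := { rX : RG; rM : RG; rI : RGFun rM rX }.

Definition lvlM (R : RGI) (l : bool) : ICat := if l then rg1 (rM R) else rg0 (rM R).
Definition lvlX (R : RGI) (l : bool) : ICat := if l then rg1 (rX R) else rg0 (rX R).
Definition lvlI (R : RGI) (l : bool) : IFun (lvlM R l) (lvlX R l) :=
  match l with true => rf1 (rI R) | false => rf0 (rI R) end.

Definition is_rgi (R : RGI) : Prop :=
  is_rg (rX R) /\ is_rg (rM R) /\ is_rgfun (rI R) /\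
  (forall l, iso (f0 (lvlI R l))) /\ (forall l, monic (f1 (lvlI R l))) /\
  (forall s, feq (fcomp (rf0 (rI R)) (fc (rM R) s)) (fcomp (fc (rX R) s) (rf1 (rI R)))) /\
  feq (fcomp (rf1 (rI R)) (dgn (rM R))) (fcomp (dgn (rX R)) (rf0 (rI R))) /\
  (* eps_I is the identity natural transformation *)
  reps (rI R) = iid (rg1 (rX R)) ⊙ (f0 (dgn (rX R)) ⊙ f0 (rf0 (rI R))) /\
  (forall l J (f : hom J (c1 (lvlM R l))), iiso f).

Definition lies_in_M (R : RGI) (l : bool) J (f : hom J (c1 (lvlX R l))) : Prop :=
  exists g : hom J (c1 (lvlM R l)), f1 (lvlI R l) ⊙ g = f.

Definition terminal_stable (R : RGI)
    (t0 : hom one (c0 (rg0 (rX R)))) (t1 : hom one (c0 (rg1 (rX R)))) : Prop :=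
  is_terminal t0 /\ is_terminal t1 /\
  (forall s, f0 (fc (rX R) s) ⊙ t1 = t0) /\
  (* the canonical morphism eta^1 : X(d)_0 o 1_X(0) -> 1_X(1) *)
  (forall u : hom one (c1 (rg1 (rX R))),
      src _ ⊙ u = f0 (dgn (rX R)) ⊙ t0 -> tgt _ ⊙ u = t1 ⊙ to_one one ->
      iiso u /\ lies_in_M (l := true) u).

Definition MnM_obj (R : RGI) (n : nat) (F : RGFun (rgpow (rM R) n) (rM R)) : Prop :=
  is_rgfun F /\ face_pres F /\ deg_pres F.

Definition MnM_hom (R : RGI) (n : nat) (F G : RGFun (rgpow (rM R) n) (rM R))
    (e0 : hom (c0 (rg0 (rgpow (rM R) n))) (c1 (rg0 (rX R))))
    (e1 : hom (c0 (rg1 (rgpow (rM R) n))) (c1 (rg1 (rX R)))) : Prop :=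
  is_rgnt (rgcomp (rI R) F) (rgcomp (rI R) G) e0 e1 /\
  nt_face_pres e0 e1 /\
  nt_deg_pres (rgcomp (rI R) F) (rgcomp (rI R) G) e0 e1.

(* M^n -> M has a terminal object: an object T such that every object F
   has exactly one morphism F -> T (morphisms being pairs of natural
   transformations, i.e. determined by their component pairs). *)
Definition MnM_has_terminal (R : RGI) (n : nat) : Prop :=
  exists T : RGFun (rgpow (rM R) n) (rM R), MnM_obj (R := R) (n := n) T /\
    forall F : RGFun (rgpow (rM R) n) (rM R), MnM_obj (R := R) (n := n) F ->
      exists e0 e1, MnM_hom (R := R) (n := n) F T e0 e1 /\
        forall e0' e1', MnM_hom (R := R) (n := n) F T e0' e1' ->
          e0' = e0 /\ e1' = e1.

End Internal.

Arguments terminal_stable {C} R t0 t1.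
Arguments MnM_has_terminal {C} R n.
Arguments is_rgi {C} R.

(* Main.v *)
Require Import Defs.
Set Implicit Arguments.
Unset Strict Implicit.

Lemma to_one_cmp (C : Cat) (a b : C) (h : hom a b) : to_one b ⊙ h = to_one a.
Proof. apply to_one_uniq. Qed.

Lemma to_one_one (C : Cat) : to_one (@one C) = idm (@one C).
Proof. apply to_one_uniq. Qed.

Lemma term_uniq (C : Cat) (X : ICat C) (t : hom one (c0 X)) :
  is_terminal t -> forall J (u v : hom J (c1 X)) (k1 k2 : hom J one),
  src X ⊙ u = src X ⊙ v -> tgt X ⊙ u = t ⊙ k1 -> tgt X ⊙ v = t ⊙ k2 -> u = v.
Proof.
  intros Ht J u v k1 k2 Hs H1 H2.
  destruct (Ht J (src X ⊙ v)) as [w [_ Hw]].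
  rewrite (to_one_uniq _ _ k1 (to_one J)) in H1.
  rewrite (to_one_uniq _ _ k2 (to_one J)) in H2.
  rewrite <- (Hw u), <- (Hw v); auto.
Qed.

Lemma term_ex (C : Cat) (X : ICat C) (t : hom one (c0 X)) :
  is_terminal t -> forall J (a : hom J (c0 X)),
  exists u : hom J (c1 X), src X ⊙ u = a /\ tgt X ⊙ u = t ⊙ to_one J.
Proof. intros Ht J a. destruct (Ht J a) as [w [Hw _]]. eauto. Qed.

Definition cst (C : Cat) (X Y : ICat C) (a : hom one (c0 Y)) : IFun X Y :=
  {| f0 := a ⊙ to_one (c0 X); f1 := iid Y ⊙ (a ⊙ to_one (c1 X)) |}.

Arguments cst {C} X Y a.

Lemma cst_ifun (C : Cat) (X Y : ICat C) (a : hom one (c0 Y)) :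
  is_icat Y -> is_ifun (cst X Y a).
Proof.
  intros [Hs [Ht [Hc [Hn [Hl Hr]]]]].
  unfold is_ifun, cst; cbn [f0 f1]. split; [|split; [|split]].
  - rewrite cmp_assoc, Hs, cmp_idl, <- cmp_assoc, to_one_cmp; reflexivity.
  - rewrite cmp_assoc, Ht, cmp_idl, <- cmp_assoc, to_one_cmp; reflexivity.
  - rewrite <- !cmp_assoc, !to_one_cmp; reflexivity.
  - intros J f g _. rewrite <- !cmp_assoc, !to_one_cmp.
    set (h := iid Y ⊙ (a ⊙ to_one J)).
    assert (E : src Y ⊙ h = a ⊙ to_one J) by (unfold h; rewrite cmp_assoc, Hs, cmp_idl; reflexivity).
    pose proof (Hl J h) as L. rewrite E in L. fold h in L. rewrite L. reflexivity.
Qed.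

Lemma nt_into_term (C : Cat) (X Y : ICat C) (F G : IFun X Y) (t : hom one (c0 Y))
  (a : hom (c0 X) (c1 Y)) :
  is_icat Y -> is_terminal t ->
  src Y ⊙ f1 F = f0 F ⊙ src X -> tgt Y ⊙ f1 F = f0 F ⊙ tgt X ->
  src Y ⊙ a = f0 F -> tgt Y ⊙ a = f0 G -> f0 G = t ⊙ to_one (c0 X) ->
  f1 G = iid Y ⊙ (t ⊙ to_one (c1 X)) -> is_nt F G a.
Proof.
  intros [Hs [Ht [Hc _]]] HT HsF HtF Ha1 Ha2 HG0 HG1.
  split; [exact Ha1 | split; [exact Ha2|]].
  assert (C1 : composable (f1 G) (a ⊙ src X)).
  { unfold composable. rewrite HG1, cmp_assoc, Hs, cmp_idl, cmp_assoc, Ha2, HG0.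
    rewrite <- cmp_assoc, to_one_cmp. reflexivity. }
  assert (C2 : composable (a ⊙ tgt X) (f1 F)).
  { unfold composable. rewrite cmp_assoc, Ha1, HtF. reflexivity. }
  destruct (Hc _ _ _ C1) as [S1 T1]. destruct (Hc _ _ _ C2) as [S2 T2].
  apply (term_uniq HT (k1 := to_one (c1 X)) (k2 := to_one (c0 X) ⊙ tgt X)).
  - rewrite S1, S2, cmp_assoc, Ha1, HsF. reflexivity.
  - rewrite T1, HG1, cmp_assoc, Ht, cmp_idl. reflexivity.
  - rewrite T2, cmp_assoc, Ha2, HG0, cmp_assoc. reflexivity.
Qed.

Lemma rw2 (C : Cat) (x y z w : C) (a : hom y z) (b : hom x y) (c : hom x z) (h : hom w x) :
  a ⊙ b = c -> a ⊙ (b ⊙ h) = c ⊙ h.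
Proof. intros E. rewrite cmp_assoc, E. reflexivity. Qed.

Lemma iso_cancel (C : Cat) (x y z : C) (f : hom y z) (i : hom z y) (a b : hom x y) :
  i ⊙ f = idm y -> f ⊙ a = f ⊙ b -> a = b.
Proof.
  intros Hi E. rewrite <- (cmp_idl _ _ _ a), <- (cmp_idl _ _ _ b), <- Hi, <- !cmp_assoc, E.
  reflexivity.
Qed.
Ltac nr := repeat rewrite <- cmp_assoc.
Ltac nr_in H := repeat rewrite <- cmp_assoc in H.
Ltac tone := repeat rewrite to_one_cmp.

Lemma main (C : Cat) (R : RGI C) (t0 : hom one (c0 (rg0 (rX R))))
    (t1 : hom one (c0 (rg1 (rX R)))) (n : nat) :
  is_rgi R -> terminal_stable R t0 t1 -> MnM_has_terminal R n.
Proof.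
  intros [rgX [rgM [[I0f I1f] [Iiso [Imon [Iface [[Id0 Id1] [Ieps Miso]]]]]]]]
         [T0 [T1 [Tf Teta]]].
  destruct rgX as [icX0 [icX1 [ftX [fbX [dX [_ fdX]]]]]].
  destruct rgM as [icM0 [icM1 [ftM [fbM [dM [_ fdM]]]]]].
  assert (fcX : forall s, is_ifun (fc (rX R) s)) by (intros []; assumption).
  assert (fcM : forall s, is_ifun (fc (rM R) s)) by (intros []; assumption).
  clear ftX fbX ftM fbM.
  destruct (Iiso false) as [i0 [i0l i0r]]. destruct (Iiso true) as [i1 [i1l i1r]].
  cbn [lvlI lvlM lvlX] in i0, i1, i0l, i0r, i1l, i1r.
  pose proof (Imon false) as Im0. cbn [lvlI lvlM lvlX] in Im0.
  cbn [fcomp f0 f1] in Id0, Id1.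
  set (I0 := rf0 (rI R)) in *. set (I1 := rf1 (rI R)) in *.
  destruct (term_ex T1 (f0 (dgn (rX R)) ⊙ t0)) as [u [us ut]].
  rewrite to_one_one, cmp_idr in ut.
  destruct (Teta u us) as [_ [g ug]].
  { rewrite ut, to_one_one, cmp_idr; reflexivity. }
  cbn [lvlI lvlM lvlX] in g, ug. fold I1 in ug.
  destruct I0f as [I0s [I0t [I0i I0c]]]. destruct I1f as [I1s [I1t [I1i I1c]]].
  pose proof icX0 as [X0si [X0ti _]]. pose proof icM0 as [M0si [M0ti _]].
  assert (KF : forall s, f0 (fc (rM R) s) ⊙ (i1 ⊙ t1) = i0 ⊙ t0).
  { intros s. destruct (Iface s) as [E0 _]. cbn [fcomp f0 f1] in E0.
    apply (iso_cancel i0l). rewrite (rw2 _ E0), (rw2 _ i0r), cmp_idl.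
    rewrite <- cmp_assoc, (rw2 _ i1r), cmp_idl. apply Tf. }
  assert (KF' : forall s J (h : hom J one), f0 (fc (rM R) s) ⊙ (i1 ⊙ (t1 ⊙ h)) = i0 ⊙ (t0 ⊙ h)).
  { intros s J h. rewrite (cmp_assoc _ _ _ _ _ i1), (rw2 _ (KF s)). nr. reflexivity. }
  assert (Gs : src (rg1 (rM R)) ⊙ g = f0 (dgn (rM R)) ⊙ (i0 ⊙ t0)).
  { apply (iso_cancel i1l). rewrite cmp_assoc, <- I1s, <- cmp_assoc. rewrite ug, us.
    rewrite (rw2 _ Id0), <- cmp_assoc, (rw2 _ i0r), cmp_idl. reflexivity. }
  assert (Gt : tgt (rg1 (rM R)) ⊙ g = i1 ⊙ t1).
  { apply (iso_cancel i1l). rewrite cmp_assoc, <- I1t, <- cmp_assoc, ug, ut.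
    rewrite cmp_assoc, i1r, cmp_idl. reflexivity. }
  assert (Gf : forall s, f1 (fc (rM R) s) ⊙ g = iid (rg0 (rM R)) ⊙ (i0 ⊙ t0)).
  { intros s. destruct (Iface s) as [_ E1]. cbn [fcomp f0 f1] in E1.
    apply Im0. rewrite cmp_assoc, E1, <- cmp_assoc, ug.
    rewrite cmp_assoc, I0i, <- cmp_assoc, (rw2 _ i0r), cmp_idl.
    destruct (fcX s) as [Fs [Ft _]]. destruct (fdX s) as [D0 _]. cbn [fcomp f0 fid] in D0.
    apply (term_uniq T0 (k1 := idm one) (k2 := idm one)).
    - rewrite cmp_assoc, Fs, <- cmp_assoc, us, cmp_assoc, D0, cmp_idl.
      rewrite cmp_assoc, X0si, cmp_idl. reflexivity.
    - rewrite cmp_assoc, Ft, <- cmp_assoc, ut, Tf, cmp_idr. reflexivity.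
    - rewrite cmp_assoc, X0ti, cmp_idl, cmp_idr. reflexivity. }
  pose proof icM1 as [M1si [M1ti [_ [_ [M1l [M1r _]]]]]].
  pose proof icX1 as [X1si [X1ti [X1c _]]].
  destruct dM as [dMs [dMt [dMi _]]]. destruct dX as [dXs [dXt [dXi _]]].
  exists (@Build_RGFun C (rgpow (rM R) n) (rM R) (cst (rg0 (rgpow (rM R) n)) (rg0 (rM R)) (i0 ⊙ t0))
            (cst (rg1 (rgpow (rM R) n)) (rg1 (rM R)) (i1 ⊙ t1)) (g ⊙ to_one (c0 (rg0 (rgpow (rM R) n))))).
  split.
  { split; [split; apply cst_ifun; assumption | split].
    - intros s. unfold feq; cbn [rf0 rf1 reps fcomp f0 f1 cst]. split.
      + nr. rewrite KF'. tone. reflexivity.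
      + destruct (fcM s) as [_ [_ [Fi _]]].
        rewrite (rw2 _ Fi). nr. rewrite KF'. tone. reflexivity.
    - unfold deg_pres; cbn [rf0 rf1 reps fcomp f0 f1 cst]. split; [split|].
      + unfold is_nt; cbn [rf0 rf1 reps fcomp f0 f1 cst]. split; [|split].
        * rewrite (rw2 _ Gs). nr. reflexivity.
        * rewrite (rw2 _ Gt). nr. tone. reflexivity.
        * pose proof (M1r _ (g ⊙ to_one (c1 (rg0 (rgpow (rM R) n))))) as E1.
          pose proof (M1l _ (g ⊙ to_one (c1 (rg0 (rgpow (rM R) n))))) as E2.
          rewrite (rw2 _ Gt) in E1. rewrite (rw2 _ Gs) in E2. nr_in E1. nr_in E2.
          nr. tone. rewrite (rw2 _ dMi). nr. rewrite E1, E2. reflexivity.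
      + exact (Miso true _ (g ⊙ to_one _)).
      + intros s. rewrite (rw2 _ (Gf s)). nr. reflexivity. }
  intros F [[[F0s [F0t _]] [F1s [F1t _]]] [Ffp [[[Fs [Ft _]] _] _]]].
  cbn [fcomp f0 f1] in Fs, Ft.
  assert (HT0 : forall J (h : hom J one), f0 I0 ⊙ ((i0 ⊙ t0) ⊙ h) = t0 ⊙ h).
  { intros J h. nr. rewrite (rw2 _ i0r), cmp_idl. reflexivity. }
  assert (HT1 : forall J (h : hom J one), f0 I1 ⊙ ((i1 ⊙ t1) ⊙ h) = t1 ⊙ h).
  { intros J h. nr. rewrite (rw2 _ i1r), cmp_idl. reflexivity. }
  destruct (term_ex T0 (f0 I0 ⊙ f0 (rf0 F))) as [e0 [e0s e0t]].
  destruct (term_ex T1 (f0 I1 ⊙ f0 (rf1 F))) as [e1 [e1s e1t]].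
  exists e0, e1. split.
  - split; [split|split].
    + apply (nt_into_term icX0 T0); cbn [rgcomp rf0 rf1 fcomp f0 f1 cst]; fold I0 I1.
      * rewrite cmp_assoc, I0s, <- cmp_assoc, F0s. nr. reflexivity.
      * rewrite cmp_assoc, I0t, <- cmp_assoc, F0t. nr. reflexivity.
      * exact e0s.
      * rewrite HT0. exact e0t.
      * apply HT0.
      * rewrite (rw2 _ I0i). nr. rewrite (rw2 _ i0r), cmp_idl. reflexivity.
    + apply (nt_into_term icX1 T1); cbn [rgcomp rf0 rf1 fcomp f0 f1 cst]; fold I0 I1.
      * rewrite cmp_assoc, I1s, <- cmp_assoc, F1s. nr. reflexivity.
      * rewrite cmp_assoc, I1t, <- cmp_assoc, F1t. nr. reflexivity.
      * exact e1s.
      * rewrite HT1. exact e1t.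
      * apply HT1.
      * rewrite (rw2 _ I1i). nr. rewrite (rw2 _ i1r), cmp_idl. reflexivity.
    + intros s. destruct (fcX s) as [Fs' [Ft' _]].
      destruct (Iface s) as [E0 _]. cbn [fcomp f0 f1] in E0.
      destruct (Ffp s) as [FF0 _]. cbn [fcomp f0 f1] in FF0.
      apply (term_uniq T0 (k1 := to_one _) (k2 := to_one _ ⊙ f0 (fc (rgpow (rM R) n) s))).
      * rewrite (cmp_assoc _ _ _ _ _ _ e0), e0s, cmp_assoc, Fs', <- cmp_assoc, e1s.
        rewrite (rw2 _ (eq_sym E0)). nr. rewrite FF0. nr. reflexivity.
      * rewrite cmp_assoc, Ft', <- cmp_assoc, e1t, cmp_assoc, Tf. reflexivity.
      * rewrite cmp_assoc, e0t. nr. reflexivity.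
    + unfold nt_deg_pres. cbn [rgcomp reps rf0 rf1 fcomp f0 f1 cst]. fold I0 I1.
      set (A := f1 I1 ⊙ reps F). set (B := reps (rI R) ⊙ f0 (rf0 F)).
      set (A' := f1 I1 ⊙ (g ⊙ to_one (c0 (rg0 (rgpow (rM R) n))))).
      set (B' := reps (rI R) ⊙ ((i0 ⊙ t0) ⊙ to_one (c0 (rg0 (rgpow (rM R) n))))).
      assert (sB : src _ ⊙ B = f0 (dgn (rX R)) ⊙ (f0 I0 ⊙ f0 (rf0 F))).
      { unfold B. rewrite Ieps. nr. rewrite (rw2 _ X1si), cmp_idl. reflexivity. }
      assert (tB : tgt _ ⊙ B = f0 (dgn (rX R)) ⊙ (f0 I0 ⊙ f0 (rf0 F))).
      { unfold B. rewrite Ieps. nr. rewrite (rw2 _ X1ti), cmp_idl. reflexivity. }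
      assert (sA : src _ ⊙ A = f0 (dgn (rX R)) ⊙ (f0 I0 ⊙ f0 (rf0 F))).
      { unfold A. rewrite cmp_assoc, I1s, <- cmp_assoc, Fs, (rw2 _ Id0). nr. reflexivity. }
      assert (tA : tgt _ ⊙ A = f0 I1 ⊙ (f0 (rf1 F) ⊙ f0 (dgn (rgpow (rM R) n)))).
      { unfold A. rewrite cmp_assoc, I1t, <- cmp_assoc, Ft. reflexivity. }
      assert (A'u : A' = u ⊙ to_one (c0 (rg0 (rgpow (rM R) n)))).
      { unfold A'. rewrite cmp_assoc, ug. reflexivity. }
      assert (sB' : src _ ⊙ B' = f0 (dgn (rX R)) ⊙ (t0 ⊙ to_one (c0 (rg0 (rgpow (rM R) n))))).
      { unfold B'. rewrite Ieps. nr. rewrite (rw2 _ X1si), cmp_idl, (rw2 _ i0r), cmp_idl. reflexivity. }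
      assert (tB' : tgt _ ⊙ B' = f0 (dgn (rX R)) ⊙ (t0 ⊙ to_one (c0 (rg0 (rgpow (rM R) n))))).
      { unfold B'. rewrite Ieps. nr. rewrite (rw2 _ X1ti), cmp_idl, (rw2 _ i0r), cmp_idl. reflexivity. }
      assert (sA' : src _ ⊙ A' = f0 (dgn (rX R)) ⊙ (t0 ⊙ to_one (c0 (rg0 (rgpow (rM R) n))))).
      { rewrite A'u, (rw2 _ us). nr. reflexivity. }
      assert (tA' : tgt _ ⊙ A' = t1 ⊙ to_one (c0 (rg0 (rgpow (rM R) n)))).
      { rewrite A'u, (rw2 _ ut). reflexivity. }
      assert (CAB : composable A B) by (unfold composable; rewrite sA, tB; reflexivity).
      assert (CAB' : composable A' B') by (unfold composable; rewrite sA', tB'; reflexivity).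
      destruct (X1c _ _ _ CAB) as [sAB tAB]. destruct (X1c _ _ _ CAB') as [sAB' tAB'].
      assert (C1 : composable (e1 ⊙ f0 (dgn (rgpow (rM R) n))) (icomp A B)).
      { unfold composable. rewrite cmp_assoc, e1s, tAB, tA. nr. reflexivity. }
      assert (C2 : composable (icomp A' B') (f1 (dgn (rX R)) ⊙ e0)).
      { unfold composable. rewrite sAB', sB', (cmp_assoc _ _ _ _ _ _ _ e0), dXt, <- cmp_assoc, e0t. reflexivity. }
      destruct (X1c _ _ _ C1) as [s1 t1']. destruct (X1c _ _ _ C2) as [s2 t2'].
      apply (term_uniq T1 (k1 := to_one _ ⊙ f0 (dgn (rgpow (rM R) n))) (k2 := to_one _)).
      * rewrite s1, sAB, sB, s2, (cmp_assoc _ _ _ _ _ _ _ e0), dXs, <- cmp_assoc, e0s. reflexivity.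
      * rewrite t1', cmp_assoc, e1t. nr. reflexivity.
      * rewrite t2', tAB', tA'. reflexivity.
  - intros e0' e1' [[[e0's [e0't _]] [e1's [e1't _]]] _].
    cbn [rgcomp rf0 rf1 fcomp f0 f1 cst] in e0's, e0't, e1's, e1't. fold I0 I1 in e0's, e0't, e1's, e1't.
    rewrite HT0 in e0't. rewrite HT1 in e1't.
    split.
    + apply (term_uniq T0 (k1 := to_one _) (k2 := to_one _)); auto.
      rewrite e0's, e0s. reflexivity.
    + apply (term_uniq T1 (k1 := to_one _) (k2 := to_one _)); auto.
      rewrite e1's, e1s. reflexivity.
Qed.

Theorem lemma41 (C : Cat) (R : RGI C) (t0 : hom one (c0 (rg0 (rX R))))
    (t1 : hom one (c0 (rg1 (rX R)))) :
  is_rgi R -> terminal_stable R t0 t1 ->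
  forall n : nat, MnM_has_terminal R n.
Proof.
  intros H1 H2 n. exact (main n H1 H2).
Qed.
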